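(* Let $f:\mathrm{GF}(p^m)\to\mathrm{GF}(p^m)$, $f(x)=x^d$ with $d<p^m$, let $0<k\le m(p-1)$ with $k\le S_p(d)$, and let $h_1,\ldots,h_k\in\mathrm{GF}(p^m)\setminus\{0\}$. Write $d$ in base $p$ as $d=d_ud_{u-1}\ldots d_1d_0$. Let $i$ be the largest integer in $\{-1,0,\ldots,u\}$ with $d_0+d_1+\cdots+d_i\le k$ (empty sum $=0$ for $i=-1$), put $d'_{i+1}=d_{i+1}-(k-(d_0+\cdots+d_i))$ (with $d_{u+1}=0$), and let $d'$ be the integer with base-$p$ digits $d_u\ldots d_{i+2}d'_{i+1}0\ldots0$ ($i+1$ trailing zeros). Then $\Delta^{(k)}_{h_1\mathbf{e}_1,\ldots,h_k\mathbf{e}_1}x^d$ is either zero or a polynomial of degree at most $d'$. In particular, for $p=2$ the binary representation of $d'$ is obtained from that of $d$ by replacing its $k$ least significant ones by zeros.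
   Context: $(\Delta_{h\mathbf{e}_1} f)(x) = f(x+h)-f(x)$ and $\Delta^{(k)}_{\mathbf{a}_1,\ldots,\mathbf{a}_k}=\Delta_{\mathbf{a}_1}\cdots\Delta_{\mathbf{a}_k}$. $S_p(a)$ denotes the sum of the digits of the nonnegative integer $a$ in base $p$. Polynomial functions over $\mathrm{GF}(p^m)$ are represented with degree at most $p^m-1$ in each variable. *)

(* Defs.v *)
From HB Require Import structures.
From mathcomp Require Import all_boot all_order all_algebra.
Set Implicit Arguments. Unset Strict Implicit. Unset Printing Implicit Defensive.
Import GRing.Theory.

Definition digit (p d j : nat) : nat := (d %/ p ^ j) %% p.

Definition topidx (p d : nat) : nat := trunc_log p d.

Definition Sp (p d : nat) : nat := \sum_(j < (topidx p d).+1) digit p d j.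

(* d_0 + ... + d_{t-1}  (t = i+1; empty sum for t = 0, i.e. i = -1) *)
Definition psum (p d t : nat) : nat := \sum_(j < t) digit p d j.

(* t = i+1 where i is the largest in {-1,..,u} with d_0+...+d_i <= k *)
Definition tidx (p d k : nat) : nat :=
  \max_(t < (topidx p d).+2 | psum p d t <= k) (nat_of_ord t).

(* d' : digits d_u ... d_{i+2} d'_{i+1} 0 ... 0, with
   d'_{i+1} = d_{i+1} - (k - (d_0+...+d_i)) *)
Definition dprime (p d k : nat) : nat :=
  let t := tidx p d k in
  (d %/ p ^ t.+1) * p ^ t.+1 + (digit p d t - (k - psum p d t)) * p ^ t.

Definition Delta (F : zmodType) (h : F) (f : F -> F) : F -> F :=
  fun x => (f (x + h) - f x)%R.

Definition DeltaK (F : zmodType) (hs : seq F) (f : F -> F) : F -> F :=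
  foldr (@Delta F) f hs.

(* Main.v *)
Require Import Defs.
From HB Require Import structures.
From mathcomp Require Import all_boot all_order all_algebra.
Set Implicit Arguments. Unset Strict Implicit. Unset Printing Implicit Defensive.
Import GRing.Theory.
From mathcomp Require Import zify.
Local Open Scope ring_scope.

Section Alg.
Variable F : fieldType.
Variable p : nat.
Hypothesis hp : prime p.
Hypothesis hchar : p \in [pchar F].
Variable T : finType.
Variable e : T -> nat.

Definition sw (i : T) := (p ^ e i)%N.
Definition w (A : {set T}) := (\sum_(i in A) sw i)%N.
Definition PD (h : F) (q : {poly F}) := q \Po ('X + h%:P) - q.
Definition Span (r : nat) (q : {poly F}) := exists l : seq (F * {set T}),
  q = \sum_(cb <- l) cb.1 *: 'X^(w cb.2) /\ all (fun cb : F * {set T} => #|cb.2| <= r)%N l.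

Lemma Span0 r : Span r 0.
Proof. by exists [::]; rewrite big_nil. Qed.

Lemma SpanD r a b : Span r a -> Span r b -> Span r (a + b).
Proof.
move=> [la [-> ha]] [lb [-> hb]]; exists (la ++ lb).
by rewrite big_cat all_cat ha hb.
Qed.

Lemma SpanZ r c a : Span r a -> Span r (c *: a).
Proof.
move=> [la [-> ha]]; exists [seq (c * cb.1, cb.2) | cb <- la]; split.
  rewrite big_map scaler_sumr; apply: eq_bigr => cb _ /=; by rewrite scalerA.
by rewrite all_map.
Qed.

Lemma SpanM r (A : {set T}) c : (#|A| <= r)%N -> Span r (c *: 'X^(w A)).
Proof. by move=> hA; exists [:: (c, A)]; rewrite big_seq1 /= hA. Qed.

Lemma Span_sum r (I : finType) (P : pred I) (G : I -> {poly F}) :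
  (forall i, P i -> Span r (G i)) -> Span r (\sum_(i | P i) G i).
Proof. by move=> hG; apply: big_ind => //; [exact: Span0 | exact: SpanD]. Qed.

Lemma comp_Xn n (q : {poly F}) : 'X^n \Po q = q ^+ n.
Proof.
elim: n => [|n IH]; first by rewrite !expr0 comp_polyC.
by rewrite !exprS comp_polyM comp_polyX IH.
Qed.

Lemma addXp (h : F) (n : nat) : ('X + h%:P) ^+ (p ^ n) = 'X^(p ^ n) + (h ^+ (p ^ n))%:P.
Proof.
rewrite exprDn_pchar ?polyC_exp //.
have hc : p \in [pchar {poly F}] by rewrite pchar_poly.
by rewrite (eq_pnat _ (pcharf_eq hc)) pnatX pnat_id.
Qed.


Lemma prod_scale (c : T -> F) (n : T -> nat) :
  \prod_i (c i *: 'X^(n i)) = (\prod_i c i) *: 'X^(\sum_i n i)%N.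
Proof.
under eq_bigr do rewrite -mul_polyC.
by rewrite big_split /= -rmorph_prod prodrXr mul_polyC.
Qed.

Lemma PD_mon h (B : {set T}) : Span (#|B|.-1) (PD h 'X^(w B)).
Proof.
rewrite /PD comp_Xn.
have -> : ('X + h%:P) ^+ w B = \prod_(i in B) ('X^(sw i) + (h ^+ sw i)%:P).
  rewrite /w -prodrXr; apply: eq_bigr => i _; exact: addXp.
pose Fi i : {poly F} := if i \in B then 'X^(sw i) else 1.
pose Gi i : {poly F} := if i \in B then (h ^+ sw i)%:P else 0.
rewrite big_mkcond /=.
have -> : \prod_i (if i \in B then 'X^(sw i) + (h ^+ sw i)%:P else 1) = \prod_i (Fi i + Gi i).
  by apply: eq_bigr => i _; rewrite /Fi /Gi; case: (i \in B); rewrite ?addr0.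
rewrite (@bigA_distr {poly F} 0 1 *%R +%R) /=.
pose c (J : {set T}) i : F := if i \in J then 1 else if i \in B then h ^+ sw i else 0.
pose ex (J : {set T}) i : nat := if (i \in J) && (i \in B) then sw i else 0%N.
have hterm (J : {set T}) : \prod_i (if i \in J then Fi i else Gi i) = (\prod_i c J i) *: 'X^(w (J :&: B)).
  have -> : \prod_i (if i \in J then Fi i else Gi i) = \prod_i (c J i *: 'X^(ex J i)).
    apply: eq_big => // i; move=> _; rewrite /c /ex /Fi /Gi.
    case: (i \in J); case: (i \in B) => /=; rewrite ?scale1r ?expr0 ?scale0r //.
    by rewrite -mul_polyC mulr1.
  rewrite prod_scale; congr (_ *: 'X^_).
  rewrite /w [RHS]big_mkcond /=; apply: eq_big => // i; move=> _; by rewrite /ex inE.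
rewrite (bigD1 setT) //= hterm.
have -> : \prod_i c setT i = 1 by apply: big1 => i _; rewrite /c inE.
rewrite setTI scale1r addrAC subrr add0r.
apply: Span_sum => J hJ.
rewrite hterm.
case: (pickP [pred i | (i \notin J) && (i \notin B)]) => [i /andP[hiJ hiB] | hnone].
  rewrite (bigD1 i) //= /c (negbTE hiJ) (negbTE hiB) mul0r scale0r; exact: Span0.
apply: SpanM.
have : (J :&: B) \proper B.
  apply/properP; split; first exact: subsetIr.
  case: (pickP [pred i | i \notin J]) => [i /= hiJ | hall].
    exists i; last by rewrite inE (negbTE hiJ).
    by move: (hnone i) => /=; rewrite hiJ /= => /negbFE.
  case/eqP: hJ; apply/setP => i; rewrite inE.
  by move: (hall i) => /= /negbFE.
move/proper_card; case: #|B| => //.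
Qed.


Lemma Span_mono r r' q : (r <= r')%N -> Span r q -> Span r' q.
Proof.
move=> hr [l [-> hl]]; exists l; split => //.
apply/allP => cb /(allP hl) /= h1; exact: leq_trans h1 hr.
Qed.

Lemma PD_Span r h q : Span r q -> Span r.-1 (PD h q).
Proof.
move=> [l [-> hl]]; elim: l hl => [|cb l IH] /=.
  by move=> _; rewrite big_nil /PD comp_poly0 subr0; exact: Span0.
case/andP=> hcb hl; rewrite big_cons.
have -> : PD h (cb.1 *: 'X^(w cb.2) + \sum_(j <- l) j.1 *: 'X^(w j.2)) =
   cb.1 *: PD h 'X^(w cb.2) + PD h (\sum_(j <- l) j.1 *: 'X^(w j.2)).
  by rewrite /PD comp_polyD comp_polyZ scalerBr opprD addrACA.
apply: SpanD; last exact: IH.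
apply: SpanZ; apply: Span_mono (PD_mon h cb.2).
by rewrite -!subn1 leq_sub2r.
Qed.

Definition PDs (hs : seq F) (q : {poly F}) := foldr PD q hs.

Lemma DeltaK_PDs (hs : seq F) (f : F -> F) (q : {poly F}) :
  (forall y, f y = q.[y]) -> forall x, DeltaK hs f x = (PDs hs q).[x].
Proof.
move=> hf; elim: hs => [|h hs IH] x /=; first exact: hf.
rewrite /Delta /PD !IH hornerD hornerN horner_comp hornerD hornerX hornerC.
by [].
Qed.

Lemma Span_size r q (D : nat) : Span r q ->
  (forall B : {set T}, (#|B| <= r)%N -> (w B <= D)%N) -> (size q <= D.+1)%N.
Proof.
move=> [l [-> hl]] hB.
elim: l hl => [|cb l IH] /=; first by rewrite big_nil size_poly0.
case/andP=> hcb hl; rewrite big_cons.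
apply: leq_trans (size_add _ _) _; rewrite geq_max IH // andbT.
apply: leq_trans (size_scale_leq _ _) _.
by rewrite size_polyXn ltnS hB.
Qed.

End Alg.

Local Close Scope ring_scope.

Section Comb.
Variable p d : nat.
Hypothesis hp : prime p.

Lemma expand t : d = (\sum_(j < t) digit p d j * p ^ j + d %/ p ^ t * p ^ t)%N.
Proof.
elim: t => [|t IH]; first by rewrite big_ord0 expn0 divn1 muln1.
rewrite big_ord_recr /= {1}IH -addnA; congr (_ + _).
rewrite {1}(divn_eq (d %/ p ^ t) p) mulnDl -mulnA -expnS -divnMA -expnSr /digit.
by rewrite addnC.
Qed.

Definition N := (topidx p d).+2.
Definition Adig : pred ('I_N * 'I_p) := fun x => (x.2 < digit p d x.1)%N.
Notation T := {x in Adig}.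
Definition e (x : T) : nat := (val x).1.

Lemma sum_T (g : nat -> nat) : (\sum_(x : T) g (e x) = \sum_(j < N) digit p d j * g j)%N.
Proof.
rewrite /e -(big_sub Adig (fun x => g x.1)).
rewrite -(pair_big_dep xpredT (fun (j : 'I_N) (c : 'I_p) => c < digit p d j) (fun (j : 'I_N) (_ : 'I_p) => g j)) /=.
apply: eq_bigr => j _.
have hle : digit p d j <= p by rewrite ltnW // ltn_mod prime_gt0.
rewrite (big_ord_narrow hle) sum_nat_const card_ord.
by [].
Qed.


Lemma psumS t : psum p d t.+1 = (psum p d t + digit p d t)%N.
Proof. by rewrite /psum big_ord_recr. Qed.

Lemma tidx_spec k : exists t : 'I_N,
  [/\ tidx p d k = t, psum p d t <= k & forall j : 'I_N, psum p d j <= k -> j <= t].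
Proof.
have h0 : psum p d (@ord0 (topidx p d).+1) <= k by rewrite /psum big_ord0.
rewrite /tidx (bigmax_eq_arg ord0) //.
case: arg_maxnP => // i hi hmax; exists i; split => //.
Qed.

Lemma comb k (B : {set T}) : k <= Sp p d -> #|B| + k <= #|{: T}| ->
  \sum_(x in B) p ^ e x <= dprime p d k.
Proof.
move=> hkS hBk.
have hp0 : 0 < p := prime_gt0 hp.
have hp1 : 1 < p := prime_gt1 hp.
have [t [ht hpk hmax]] := tidx_spec k.
have htN : t < N := ltn_ord t.
have hk2 : k <= psum p d t + digit p d t.
  rewrite -psumS; case: (ltnP t.+1 N) => [hlt|hge].
    rewrite leqNgt; apply/negP => hlt2.
    have := hmax (Ordinal hlt) (ltnW hlt2); by rewrite /= ltnn.
  have htv : nat_of_ord t = (topidx p d).+1 by move: hge htN; rewrite /N; lia.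
  rewrite psumS htv; apply: leq_trans hkS _; rewrite /Sp /psum; exact: leq_addr.
have hd := expand t.+1; rewrite big_ord_recr /= in hd.
set S := (\sum_(j < t) digit p d j * p ^ j) in hd.
set H := d %/ p ^ t.+1 * p ^ t.+1 in hd.
have hdp : dprime p d k = H + (digit p d t - (k - psum p d t)) * p ^ t by rewrite /dprime ht.
set P := p ^ t in hd hdp.
have wT : \sum_(x : T) p ^ e x = d.
  rewrite (sum_T (expn p)) {2}(expand N) (@divn_small d) ?mul0n ?addn0 //.
  apply: leq_trans (trunc_log_ltn d hp1) _; rewrite /N leq_pexp2l //.
have hsplit : \sum_(x in B) p ^ e x + \sum_(x | x \notin B) p ^ e x = d.
  by rewrite -wT [RHS](bigID (fun x => x \in B)) /=.
have hcC : \sum_(x | x \notin B) (P - p ^ e x) <= \sum_(x : T) (P - p ^ e x).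
  by rewrite [X in _ <= X](bigID (fun x => x \in B)) /= leq_addl.
have hCP : #|[predC B]| * P <= \sum_(x | x \notin B) p ^ e x + \sum_(x | x \notin B) (P - p ^ e x).
  rewrite -big_split /= -sum_nat_const.
  rewrite (eq_bigl (fun x => x \notin B)); last by move=> x; rewrite inE.
  by apply: leq_sum => x _; lia.
have hcT : \sum_(x : T) (P - p ^ e x) + S = psum p d t * P.
  rewrite (sum_T (fun j => P - p ^ j)) (bigID (fun j : 'I_N => j < t)) /=.
  rewrite [X in _ + X + _]big1 ?addn0; last first.
    move=> j hj; rewrite -leqNgt in hj.
    have -> : P - p ^ j = 0 by apply/eqP; rewrite subn_eq0 leq_pexp2l.
    by rewrite muln0.
  rewrite (big_ord_narrow (ltnW htN)) /psum /S big_distrl -big_split /=.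
  apply: eq_bigr => j _; rewrite -mulnDr subnK // leq_pexp2l // ltnW //.
have hkC : k <= #|[predC B]|.
  have hc := cardC B; rewrite -hc in hBk; by rewrite -(leq_add2l #|B|).
have hkP : k * P <= #|[predC B]| * P by rewrite leq_mul2r hkC orbT.
have hm : (digit p d t - (k - psum p d t)) * P = digit p d t * P - (k - psum p d t) * P by rewrite mulnBl.
have hm2 : (k - psum p d t) * P = k * P - psum p d t * P by rewrite mulnBl.
have hm3 : psum p d t * P <= k * P by rewrite leq_mul2r hpk orbT.
have hm4 : (k - psum p d t) * P <= digit p d t * P by rewrite leq_mul2r leq_subLR hk2 orbT.
move: hm hm2 hm3 hm4 hkP hCP hcC hcT hsplit hd hdp.
rewrite -/P.
set a := digit p d t * P; set b := (k - psum p d t) * P; set c := psum p d t * P.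
set kp := k * P; set cp := #|[predC B]| * P.
set wB := \sum_(x in B) _; set wC := \sum_(x | x \notin B) p ^ e x.
set cC := \sum_(x | x \notin B) _; set cT := \sum_(x : T) _.
set z := (digit p d t - (k - psum p d t)) * P.
lia.
Qed.


Lemma wT_eq : \sum_(x : T) p ^ e x = d.
Proof.
have hp1 : 1 < p := prime_gt1 hp.
rewrite (sum_T (expn p)) {2}(expand N) (@divn_small d) ?mul0n ?addn0 //.
apply: leq_trans (trunc_log_ltn d hp1) _; rewrite /N leq_pexp2l // prime_gt0 //.
Qed.

Lemma card_T : Sp p d <= #|{: T}|.
Proof.
rewrite -sum1_card (eq_bigl xpredT) // (sum_T (fun _ => 1)) /N big_ord_recr /=.
rewrite /Sp; apply: leq_trans (leq_addr _ _); apply: leq_sum => j _; by rewrite muln1.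
Qed.

End Comb.


Local Open Scope ring_scope.

Theorem mainTheorem11 (F : finFieldType) (p m d k : nat)
  (hp : prime p) (hchar : p \in [pchar F]) (hcard : #|F| = (p ^ m)%N)
  (hd : (d < p ^ m)%N) (hk0 : (0 < k)%N) (hkm : (k <= m * (p - 1))%N)
  (hkS : (k <= Sp p d)%N)
  (h : 'I_k -> F) (hnz : forall j, h j != 0) :
  exists q : {poly F},
    (size q <= (dprime p d k).+1)%N /\
    forall x : F,
      DeltaK [seq h j | j <- enum 'I_k] (fun y : F => y ^+ d) x = q.[x].
Proof.
set hs := [seq h j | j <- enum 'I_k].
have hF : forall y : F, y ^+ d = ('X^d : {poly F}).[y] by move=> y; rewrite hornerXn.
exists (PDs hs 'X^d); split; last exact: DeltaK_PDs.
have hS : forall l : seq F,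
    Span p (@e p d) (#|{: {x in @Adig p d}}| - size l) (PDs l 'X^d).
  elim => [|h0 l IH] /=.
    rewrite subn0.
    have hw : w p (@e p d) setT = d.
      rewrite /w /sw -[RHS](wT_eq d hp).
      by apply: eq_big => // x; rewrite inE.
    have -> : ('X^d : {poly F}) = 1 *: 'X^(w p (@e p d) setT) by rewrite scale1r hw.
    by apply: SpanM; rewrite cardsT.
  by rewrite subnS; apply: (PD_Span hp hchar).
apply: (Span_size (hS hs)) => B hB.
have hsz : size hs = k by rewrite size_map size_enum_ord.
rewrite hsz in hB.
apply: comb => //.
have hc := card_T d hp.
have hkn := leq_trans hkS hc.
by rewrite addnC -leq_subRL.
Qed.
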